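(* Let $\Sigma$ be a finite alphabet, $L \subseteq \Sigma^*$ a regular language, and $\mathcal{B}$ a DFA recognizing $L^\mathsf{R}$ that is not well-behaved. Then $V_L(n) \in \Omega(n)$ and $F_L(n) \in \mathcal{O}(n)\setminus o(n)$.
   Context: $L^\mathsf{R}=\{x^\mathsf{R}:x\in L\}$ (word reversal). A DFA $(Q,\Sigma,q_0,\delta,F)$ is well-behaved if every strongly connected component $C$ (inclusion-maximal set of mutually reachable states) reachable from $q_0$ satisfies: for all $q\in C$ and $u,v\in\Sigma^*$ with $|u|=|v|$ and $\delta(q,u),\delta(q,v)\in C$, $\delta(q,u)\in F\iff\delta(q,v)\in F$. A streaming algorithm is a deterministic (possibly infinite-state) automaton with an injective encoding $\mathrm{enc}$ of states into bit strings. Fixed-size: fix $a\in\Sigma$, $\mathrm{last}_n(a_1\cdots a_m)=a_{m-n+1}\cdots a_m$ if $n\le m$, else $a^{n-m}a_1\cdots a_m$; a fixed-size algorithm is $(\mathcal{A}_n)$ with $\mathcal{A}_n$ accepting $\{w:\mathrm{last}_n(w)\in L\}$, space at $n$ = maximal encoding length of a state of $\mathcal{A}_n$; $F_L(n)$ is the minimum over all such algorithms. Variable-size: over $\overline\Sigma=\Sigma\cup\{\downarrow\}$, $\mathrm{wnd}(\varepsilon)=\varepsilon$, $\mathrm{wnd}(ub)=\mathrm{wnd}(u)b$ ($b\in\Sigma$), $\mathrm{wnd}(u\!\downarrow)=\varepsilon$ if $\mathrm{wnd}(u)=\varepsilon$, $\mathrm{wnd}(u\!\downarrow)=v$ if $\mathrm{wnd}(u)=bv$;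 an algorithm accepts $\{w:\mathrm{wnd}(w)\in L\}$ and has space complexity $v_\mathcal{A}(n)=\max\{|\mathrm{enc}(\mathcal{A}(u'))|: u' \text{ prefix of } u,\ |\mathrm{wnd}(v)|\le n\text{ for all prefixes }v\text{ of }u\}$; $V_L(n)$ is the minimum of $v_\mathcal{A}(n)$ over all such algorithms. *)

(* Defs.v *)
From mathcomp Require Import all_boot.
Set Implicit Arguments. Unset Strict Implicit. Unset Printing Implicit Defensive.

Record dfa (S : Type) := Dfa {
  dfa_state : finType;
  dfa_init : dfa_state;
  dfa_delta : dfa_state -> S -> dfa_state;
  dfa_final : pred dfa_state }.

Definition dfa_run S (A : dfa S) (q : dfa_state A) (w : seq S) : dfa_state A := foldl (@dfa_delta _ A) q w.
Definition dfa_accepts S (A : dfa S) (w : seq S) : bool :=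
  @dfa_final _ A (@dfa_run _ A (@dfa_init _ A) w).

Definition regular (S : Type) (L : pred (seq S)) : Prop :=
  exists A : dfa S, forall w, dfa_accepts A w = L w.

Definition reach S (A : dfa S) (q q' : dfa_state A) : Prop := exists w, @dfa_run _ A q w = q'.

Definition mutually_reachable S (A : dfa S) (C : {set dfa_state A}) : Prop :=
  forall p q, p \in C -> q \in C -> reach p q.
Definition is_scc S (A : dfa S) (C : {set dfa_state A}) : Prop :=
  mutually_reachable C /\
  forall D : {set dfa_state A}, C \subset D -> mutually_reachable D -> D = C.

Definition well_behaved S (A : dfa S) : Prop :=
  forall C : {set dfa_state A}, is_scc C -> (exists q, q \in C /\ reach (@dfa_init _ A) q) ->
  forall (q : dfa_state A) (u v : seq S), q \in C -> size u = size v ->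
    @dfa_run _ A q u \in C -> @dfa_run _ A q v \in C ->
    (@dfa_final _ A (@dfa_run _ A q u) <-> @dfa_final _ A (@dfa_run _ A q v)).

Record stream_alg (S : Type) := StreamAlg {
  sa_state : Type;
  sa_init : sa_state;
  sa_step : sa_state -> S -> sa_state;
  sa_acc : sa_state -> bool;
  sa_enc : sa_state -> seq bool;
  sa_enc_inj : injective sa_enc }.

Definition sa_run S (A : stream_alg S) (w : seq S) : sa_state A :=
  foldl (@sa_step _ A) (@sa_init _ A) w.
Definition sa_accepts S (A : stream_alg S) (w : seq S) : bool := @sa_acc _ A (sa_run A w).

Definition last_n (S : Type) (a : S) (n : nat) (w : seq S) : seq S :=
  if n <= size w then drop (size w - n) w else nseq (n - size w) a ++ w.

(* F_L(n) <= k : some algorithm A_n for {w | last_n(w) in L} has all state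
   encodings of length at most k (space of A_n = max encoding length of a state) *)
Definition FL_le (S : Type) (a : S) (L : pred (seq S)) (n k : nat) : Prop :=
  exists A : stream_alg S,
    (forall w, sa_accepts A w = L (last_n a n w)) /\
    (forall q : sa_state A, size (@sa_enc _ A q) <= k).

(* None plays the role of the pop symbol "down-arrow" *)
Definition wnd_step (S : Type) (x : seq S) (c : option S) : seq S :=
  match c with Some b => rcons x b | None => behead x end.
Definition wnd (S : Type) (u : seq (option S)) : seq S := foldl (@wnd_step S) [::] u.

Definition vspace_le (S : Type) (A : stream_alg (option S)) (n k : nat) : Prop :=
  forall u : seq (option S),
    (forall i, i <= size u -> size (wnd (take i u)) <= n) ->
    forall i, i <= size u -> size (@sa_enc _ A (sa_run A (take i u))) <= k.

Definition VL_le (S : Type) (L : pred (seq S)) (n k : nat) : Prop :=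
  exists A : stream_alg (option S),
    (forall w, sa_accepts A w = L (wnd w)) /\ vspace_le A n k.

(* ---------- linear asymptotics for f given by  f_le n k := f(n) <= k ---------- *)
Definition Omega_lin (f_le : nat -> nat -> Prop) : Prop :=
  exists a b N, 0 < a /\ 0 < b /\
    forall n, N <= n -> forall m, f_le n m -> a * n <= b * m.
Definition bigO_lin (f_le : nat -> nat -> Prop) : Prop :=
  exists C N, forall n, N <= n -> f_le n (C * n).
Definition littleo_lin (f_le : nat -> nat -> Prop) : Prop :=
  forall a b, 0 < a -> 0 < b -> exists N, forall n, N <= n ->
    exists m, f_le n m /\ b * m <= a * n.

(* Main.v *)
Require Import Defs.
From mathcomp Require Import all_boot.
From mathcomp Require Import zify.
From Stdlib Require Import Classical.

Lemma run_cat S (A : dfa S) (p : dfa_state A) w1 w2 :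
  dfa_run p (w1 ++ w2) = dfa_run (dfa_run p w1) w2.
Proof. exact: foldl_cat. Qed.

Lemma takeD_cat T (p r : seq T) l : take (size p + l) (p ++ r) = p ++ take l r.
Proof. by elim: p => //= a p ->. Qed.

Lemma take_cat_le T (p r : seq T) l : l <= size p -> take l (p ++ r) = take l p.
Proof.
move=> H; rewrite take_cat; case: ltnP => // H2.
have E : l = size p by lia.
by rewrite E subnn take0 cats0 take_size.
Qed.

Definition code (s : seq bool) : nat := foldr (fun (b : bool) (acc : nat) => nat_of_bool b + 2 * acc) 1 s.

Lemma code_pos s : 0 < code s.
Proof. elim: s => //= b s IH; case: b => /=; lia. Qed.

Lemma code_lt s : code s < 2 ^ (size s).+1.
Proof. elim: s => //= b s IH; rewrite expnS; case: b => /=; lia. Qed.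

Lemma code_inj : injective code.
Proof.
elim => [|b1 s1 IH] [|b2 s2] //=.
- move=> h; have := code_pos s2; case: b2 h => /= h h'; exfalso; lia.
- move=> h; have := code_pos s1; case: b1 h => /= h h'; exfalso; lia.
- move=> h.
  have E1 : b1 = b2 by case: b1 h; case: b2 => //= h; exfalso; lia.
  subst b2.
  have E2 : code s1 = code s2 by case: b1 h => /= h; lia.
  by rewrite (IH _ E2).
Qed.

Lemma count_bound (T : Type) (enc : T -> seq bool) (encI : injective enc)
  (f : seq bool -> T) k M :
  (forall t t', size t = k -> size t' = k -> f t = f t' -> t = t') ->
  (forall t, size t = k -> size (enc (f t)) <= M) -> k <= M.+1.
Proof.
move=> Hinj Hsz.
have Hlt : forall t : k.-tuple bool, code (enc (f t)) < 2 ^ M.+1.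
  move=> t; apply: (leq_trans (code_lt _)); rewrite leq_exp2l // ltnS.
  by apply: Hsz; exact: size_tuple.
pose g (t : k.-tuple bool) : 'I_(2 ^ M.+1) := Ordinal (Hlt t).
have gI : injective g.
  move=> t1 t2 /(congr1 val) /= /code_inj /encI /Hinj E; apply: val_inj.
  by apply: E; exact: size_tuple.
by have := @leq_card _ _ g gI; rewrite card_tuple card_bool card_ord leq_exp2l.
Qed.

Section Win.
Variables (S : finType) (a : S) (L : pred (seq S)) (n : nat).

Lemma shift_proof (t : n.-tuple S) (c : S) : size (behead (rcons t c)) == n.
Proof. by rewrite size_behead size_rcons size_tuple. Qed.

Definition shift (t : n.-tuple S) c : n.-tuple S := Tuple (shift_proof t c).
Definition cd (c : S) : seq bool := rcons (nseq (enum_rank c) true) false.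
Definition wenc (t : n.-tuple S) : seq bool := flatten (map cd t).

Lemma nseq_false_inj i j (r1 r2 : seq bool) :
  nseq i true ++ false :: r1 = nseq j true ++ false :: r2 -> i = j /\ r1 = r2.
Proof.
elim: i j => [|i IH] [|j] /=; try by case.
by case=> /IH [-> ->].
Qed.

Lemma wenc_inj_seq (t1 t2 : seq S) :
  flatten (map cd t1) = flatten (map cd t2) -> t1 = t2.
Proof.
elim: t1 t2 => [|c1 t1 IH] [|c2 t2] //=; rewrite /cd ?cat_rcons.
- by case: (nat_of_ord (enum_rank c2)).
- by case: (nat_of_ord (enum_rank c1)).
- by move=> /nseq_false_inj [/ord_inj/enum_rank_inj -> /IH ->].
Qed.

Lemma wenc_inj : injective wenc.
Proof. by move=> t1 t2 /wenc_inj_seq E; apply: val_inj. Qed.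

Lemma cd_size c : size (cd c) <= #|S|.
Proof. by rewrite /cd size_rcons size_nseq; exact: ltn_ord. Qed.

Lemma wenc_size_seq (t : seq S) : size (flatten (map cd t)) <= size t * #|S|.
Proof.
elim: t => //= c t IH.
rewrite size_cat mulSn.
exact: leq_add (cd_size c) IH.
Qed.

Definition walg : stream_alg S :=
  @StreamAlg S (n.-tuple S) (nseq_tuple n a) shift (fun t => L t) wenc wenc_inj.

Lemma behead_rcons_cat (l : seq S) c w : behead (rcons l c) ++ w = drop 1 (l ++ c :: w).
Proof. by case: l => [|h l] /=; rewrite drop0 ?cat_rcons. Qed.

Lemma fold_shift (t0 : n.-tuple S) w :
  val (foldl shift t0 w) = drop (size w) (val t0 ++ w).
Proof.
elim: w t0 => [|c w IH] t0 /=; first by rewrite drop0 cats0.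
by rewrite IH /= behead_rcons_cat drop_drop addn1.
Qed.

Lemma walg_ok w : sa_accepts walg w = L (last_n a n w).
Proof.
rewrite /sa_accepts /sa_run /= fold_shift /last_n /= drop_cat size_nseq.
case: (leqP n (size w)) => H //.
by rewrite drop_nseq.
Qed.

Lemma walg_size (t : n.-tuple S) : size (wenc t) <= #|S| * n.
Proof. by have := wenc_size_seq t; rewrite size_tuple mulnC. Qed.

End Win.

Lemma foldl_wnd_some S0 (x0 w : seq S0) :
  foldl (@wnd_step S0) x0 (map Some w) = x0 ++ w.
Proof.
elim: w x0 => [|c w IH] x0 /=; first by rewrite cats0.
by rewrite IH cat_rcons.
Qed.

Lemma foldl_wnd_none S0 (x0 : seq S0) d :
  foldl (@wnd_step S0) x0 (nseq d None) = drop d x0.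
Proof.
elim: d x0 => [|d IH] x0 /=; first by rewrite drop0.
by rewrite IH; case: x0.
Qed.

Lemma diff_idx (t t' : seq bool) : size t = size t' -> t <> t' ->
  exists j, j < size t /\ nth false t j != nth false t' j.
Proof.
move=> Hsz Hne; apply: NNPP => Hn; apply: Hne.
apply: (eq_from_nth (x0:=false) Hsz) => i Hi.
case: (eqVneq (nth false t i) (nth false t' i)) => // Hd.
by exfalso; apply: Hn; exists i.
Qed.

Section Core.
Variables (S : finType) (B : dfa S) (q : dfa_state B) (s u v x y : seq S).
Hypotheses (Hs : dfa_run (dfa_init B) s = q) (Hx : dfa_run q x = q)
  (Hy : dfa_run q y = q)
  (Hsz : size y = size x) (Hux : take (size u) x = u) (Hvy : take (size u) y = v)
  (Hule : size u <= size x)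
  (Hfin : dfa_final (dfa_run q u) != dfa_final (dfa_run q v)).

Definition blk (b : bool) := if b then x else y.
Definition blocks (t : seq bool) := flatten (map blk t).

Lemma size_blk b : size (blk b) = size x.
Proof. by case: b. Qed.

Lemma size_blocks t : size (blocks t) = size t * size x.
Proof.
elim: t => //= b t IH.
by rewrite /blocks /= size_cat -/(blocks t) IH size_blk mulSn.
Qed.

Lemma run_blocks t : dfa_run q (blocks t) = q.
Proof.
elim: t => //= b t IH.
by rewrite /blocks /= run_cat -/(blocks t); case: b => /=; rewrite ?Hx ?Hy.
Qed.

Lemma take_blocks t j : j < size t ->
  take (j * size x + size u) (blocks t) =
  blocks (take j t) ++ (if nth false t j then u else v).
Proof.
move=> Hj.
rewrite -{1}(cat_take_drop j t) (drop_nth false Hj) /blocks map_cat flatten_cat /=.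
have Hs' : size (flatten (map blk (take j t))) = j * size x.
  by rewrite -/(blocks _) size_blocks size_take Hj.
rewrite -Hs' takeD_cat take_cat_le ?size_blk //.
by case: (nth false t j) => /=; rewrite ?Hux ?Hvy.
Qed.

Lemma final_blocks t j : j < size t ->
  dfa_final (dfa_run q (take (j * size x + size u) (blocks t))) =
  if nth false t j then dfa_final (dfa_run q u) else dfa_final (dfa_run q v).
Proof. by move=> Hj; rewrite take_blocks // run_cat run_blocks; case: nth. Qed.

Lemma if_diff (b b' : bool) : b != b' ->
  (if b then dfa_final (dfa_run q u) else dfa_final (dfa_run q v)) !=
  (if b' then dfa_final (dfa_run q u) else dfa_final (dfa_run q v)).
Proof. by move: Hfin; case: b; case: b' => //= H _; rewrite eq_sym. Qed.

Lemma fixed_distinct (a : S) (L : pred (seq S))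
  (HB : forall w, dfa_accepts B w = L (rev w)) (A : stream_alg S) K
  (HA : forall w, sa_accepts A w = L (last_n a (size s + K * size x + size u) w))
  t t' : size t = K.+1 -> size t' = K.+1 ->
  sa_run A (rev (blocks t)) = sa_run A (rev (blocks t')) -> t = t'.
Proof.
move=> Ht Ht' Heq; apply: NNPP => Hne.
have [j [Hj Hd]] := @diff_idx t t' (etrans Ht (esym Ht')) Hne.
rewrite Ht in Hj.
set z := rev (s ++ blocks (nseq (K - j) true)).
have key : forall t0, size t0 = K.+1 ->
    sa_accepts A (rev (blocks t0) ++ z) =
    (if nth false t0 j then dfa_final (dfa_run q u) else dfa_final (dfa_run q v)).
  move=> t0 Ht0; rewrite HA.
  have E1 : (K - j) * size x + j * size x = K * size x.
    by rewrite -mulnDl subnK // -ltnS.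
  have E2 : K.+1 * size x = K * size x + size x by rewrite mulSn addnC.
  have HW : size (rev (blocks t0) ++ z) =
      K.+1 * size x + (size s + (K - j) * size x).
    by rewrite /z size_cat !size_rev size_cat !size_blocks size_nseq Ht0.
  rewrite -[last_n _ _ _]revK -HB /last_n ifT; last first.
    rewrite HW; move: E1 E2; move: ((K - j) * size x) (j * size x)
      (K * size x) (K.+1 * size x) => P Q R R1; lia.
  rewrite rev_drop subKn; last first.
    rewrite HW; move: E1 E2; move: ((K - j) * size x) (j * size x)
      (K * size x) (K.+1 * size x) => P Q R R1; lia.
  rewrite rev_cat revK /z revK.
  have Hn : size s + K * size x + size u =
      size (s ++ blocks (nseq (K - j) true)) + (j * size x + size u).
    rewrite size_cat size_blocks size_nseq -E1; lia.
  rewrite Hn takeD_cat /dfa_accepts !run_cat Hs run_blocks final_blocks //.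
  by rewrite Ht0.
have E : sa_accepts A (rev (blocks t) ++ z) = sa_accepts A (rev (blocks t') ++ z).
  by rewrite /sa_accepts /sa_run !foldl_cat; rewrite /sa_run in Heq; rewrite Heq.
rewrite !key // in E.
by move: (@if_diff _ _ Hd); rewrite E eqxx.
Qed.

Lemma var_distinct (L : pred (seq S))
  (HB : forall w, dfa_accepts B w = L (rev w)) (A : stream_alg (option S)) K
  (HA : forall w, sa_accepts A w = L (wnd w))
  t t' : size t = K.+1 -> size t' = K.+1 ->
  sa_run A (map Some (rev (blocks t))) = sa_run A (map Some (rev (blocks t'))) ->
  t = t'.
Proof.
move=> Ht Ht' Heq; apply: NNPP => Hne.
have [j [Hj Hd]] := @diff_idx t t' (etrans Ht (esym Ht')) Hne.
rewrite Ht in Hj.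
set d := (K - j) * size x + (size x - size u).
set z := nseq d None ++ map Some (rev s).
have key : forall t0, size t0 = K.+1 ->
    sa_accepts A (map Some (rev (blocks t0)) ++ z) =
    (if nth false t0 j then dfa_final (dfa_run q u) else dfa_final (dfa_run q v)).
  move=> t0 Ht0; rewrite HA /wnd /z !foldl_cat foldl_wnd_some foldl_wnd_none
    foldl_wnd_some /=.
  rewrite -[drop _ _ ++ _]revK -HB rev_cat revK rev_drop revK size_rev size_blocks.
  have E1 : (K - j) * size x + j * size x = K * size x.
    by rewrite -mulnDl subnK // -ltnS.
  have E2 : K.+1 * size x = K * size x + size x by rewrite mulSn addnC.
rewrite Ht0.   have -> : K.+1 * size x - d = j * size x + size u.
    rewrite /d; move: E1 E2; move: ((K - j) * size x) (j * size x)
      (K * size x) (K.+1 * size x) => P Q R R1; lia.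
  by rewrite /dfa_accepts run_cat Hs final_blocks // Ht0.
have E : sa_accepts A (map Some (rev (blocks t)) ++ z) =
         sa_accepts A (map Some (rev (blocks t')) ++ z).
  by rewrite /sa_accepts /sa_run !foldl_cat; rewrite /sa_run in Heq; rewrite Heq.
rewrite !key // in E.
by move: (@if_diff _ _ Hd); rewrite E eqxx.
Qed.

End Core.

Theorem theorem5p3 (S : finType) (L : pred (seq S)) (B : dfa S) :
  regular L ->
  (forall w, dfa_accepts B w = L (rev w)) ->
  ~ well_behaved B ->
  Omega_lin (VL_le L) /\
  (forall a : S, bigO_lin (FL_le a L) /\ ~ littleo_lin (FL_le a L)).
Proof.
move=> _ HB Hnwb.
have [C [q [u [v [HC [[q0 [Hq0 [s0 Hs0]]] [Hq [Hsz [Hu [Hv Hf]]]]]]]]]] :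
  exists C q u v, is_scc C /\ (exists q0, q0 \in C /\ reach (dfa_init B) q0) /\
    q \in C /\ size u = size v /\ dfa_run q u \in C /\ dfa_run q v \in C /\
    ~ (dfa_final (dfa_run q u) <-> dfa_final (dfa_run q v)).
  apply: NNPP => Hn; apply: Hnwb => C HC Hr q u v Hq Hs Hu Hv.
  apply: NNPP => Hf; apply: Hn; exists C, q, u, v; tauto.
have Hfin : dfa_final (dfa_run q u) != dfa_final (dfa_run q v).
  by apply/negP => /eqP E; apply: Hf; rewrite E.
have Hupos : 0 < size u.
  rewrite lt0n; apply/negP => /eqP /size0nil E0.
  move: Hsz; rewrite E0 => /esym /size0nil E1.
  by move: Hfin; rewrite E0 E1 eqxx.
have [s1 Hs1] := HC.1 _ _ Hq0 Hq.
have [ru Hru] := HC.1 _ _ Hu Hq.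
have [rv Hrv] := HC.1 _ _ Hv Hq.
pose s := s0 ++ s1.
have Hs : dfa_run (dfa_init B) s = q by rewrite /s run_cat Hs0.
pose x := u ++ ru ++ v ++ rv.
pose y := v ++ rv ++ u ++ ru.
have Hx : dfa_run q x = q by rewrite /x !run_cat Hru Hrv.
have Hy : dfa_run q y = q by rewrite /y !run_cat Hrv Hru.
have Hsz' : size y = size x by rewrite /x /y !size_cat Hsz; lia.
have Hux : take (size u) x = u by rewrite /x take_size_cat.
have Hvy : take (size u) y = v by rewrite /y Hsz take_size_cat.
have Hule : size u <= size x by rewrite /x size_cat leq_addr.
have Hxpos : 0 < size x by lia.
split.
- exists 1, (2 * size x), (3 * size x); split; first by [].
  split; first lia.
  move=> n Hn M [A [HA Hsp]].
  pose k := n %/ size x.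
  have Hk1 : k * size x <= n := leq_divM n (size x).
  have Hk2 : n < k.+1 * size x := ltn_ceil n Hxpos.
  have Hk3 : 3 <= k by rewrite /k leq_divRL.
  have HkM : k <= M.+1.
    apply: (@count_bound _ _ (@sa_enc_inj _ A)
      (fun t => sa_run A (map Some (rev (blocks _ x y t))))).
    + move=> t t' Ht Ht'.
      have Ek : k = k.-1.+1 by rewrite prednK //; lia.
      rewrite Ek in Ht Ht'.
      exact: (@var_distinct _ _ _ _ _ _ _ _ Hs Hx Hy Hsz' Hux Hvy Hule Hfin _ HB _ _ HA _ _ Ht Ht').
    + move=> t Ht.
      have Hpre : forall i, i <= size (map Some (rev (blocks _ x y t))) ->
          size (wnd (take i (map Some (rev (blocks _ x y t))))) <= n.
        move=> i _; rewrite -map_take /wnd foldl_wnd_some /=.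
        rewrite size_take size_rev size_blocks; last exact: Hsz'. rewrite Ht; case: ltnP => h; lia.
      have := Hsp _ Hpre _ (leqnn _); by rewrite take_size.
  have H1 : k.+1 <= 2 * M by lia.
  have := leq_mul H1 (leqnn (size x)).
  rewrite mul1n mulnAC; lia.
- move=> a; split.
  + exists #|S|, 0 => n _.
    exists (@walg _ a L n); split; [exact: walg_ok | exact: walg_size].
  + move=> H.
    have [N HN] := H 1 (2 * size x) isT (ltac:(lia)).
    pose K := N + size s + 3.
    pose n := size s + K * size x + size u.
    have HKx : K <= K * size x by rewrite leq_pmulr.
    have Hn : N <= n by rewrite /n; lia.
    have [M [[A [HA Hsp]] HM]] := HN n Hn.
    have HkM : K.+1 <= M.+1.
      apply: (@count_bound _ _ (@sa_enc_inj _ A)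
        (fun t => sa_run A (rev (blocks _ x y t)))).
      + move=> t t' Ht Ht'.
        exact: (@fixed_distinct _ _ _ _ _ _ _ _ Hs Hx Hy Hsz' Hux Hvy Hule Hfin _ _ HB _ _ HA _ _ Ht Ht').
      + by move=> t _; apply: Hsp.
    have h1 := leq_mul (HkM : K <= M) (leqnn (size x)).
    have h2 : K * size x = N * size x + size s * size x + 3 * size x.
      by rewrite /K !mulnDl.
    have h3 : size s <= size s * size x by rewrite leq_pmulr.
    have h4 : N <= N * size x by rewrite leq_pmulr.
    move: HM; rewrite /n; lia.
Qed.
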